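(* For an integer $k \geq -1$ and real $b \geq 0$ define \[ J_k = J_k(b) = \int_{-1}^{1} (1-x^2)^{k/2} e^{bx}\, \mathrm{d}x. \] Then for every integer $d \geq 2$ and every $b \geq 0$: (a) $b^2 J_{d+1} = -d(d+1) J_{d-1} + (d+1)(d-1) J_{d-3}$; (b) $\dfrac{J_{d-3}}{J_{d-1}} \geq \dfrac{d}{d-1}\left(\dfrac12 + \sqrt{\dfrac14 + \dfrac{b^2}{d(d+2)}}\right)$; (c) $\dfrac{J_{d-1}}{J_{d+1}} \leq \dfrac{d+2}{d+1}\left(\dfrac12 + \sqrt{\dfrac14 + \dfrac{b^2}{d(d+2)}}\right)$; (d) $J_{d+1} J_{d-3} \geq J_{d-1}^2 \dfrac{d(d+1)}{(d-1)(d+2)}$. *)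

(* Defs.v *)
From Stdlib Require Import Reals ClassicalEpsilon.
Open Scope R_scope.

(* Integrand (1 - x^2)^(k/2) * e^(b x); only evaluated for -1 < x < 1,
   where 1 - x^2 > 0, so Rpower is the genuine real power. *)
Definition J_integrand (k : Z) (b : R) (x : R) : R :=
  Rpower (1 - x ^ 2) (IZR k / 2) * exp (b * x).

Definition improper_int_m1_1 (f : R -> R) (L : R) : Prop :=
  exists F : R -> R,
    (forall e, 0 < e < 1 ->
       exists pr : Riemann_integrable f (-1 + e) (1 - e), RiemannInt pr = F e)
    /\ limit1_in F (fun e => 0 < e < 1) L 0.

(* J_k(b) = \int_{-1}^{1} (1-x^2)^{k/2} e^{bx} dx  (the value of the
   improper integral; it exists for k >= -1). *)
Definition J (k : Z) (b : R) : R :=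
  epsilon (inhabits 0) (fun L => improper_int_m1_1 (J_integrand k b) L).

(* Main.v *)
Require Import Defs.
From Stdlib Require Import Reals ZArith.
From Stdlib Require Import Lra Lia Psatz ClassicalEpsilon.
From Coquelicot Require Import Coquelicot.
Open Scope R_scope.

Definition g (n : nat) (b t : R) : R := cos t ^ n * exp (b * sin t).
Definition T (n : nat) (b : R) : R := RInt (g n b) (-(PI/2)) (PI/2).

Lemma g_cont n b t : continuous (g n b) t.
Proof. unfold g. apply (ex_derive_continuous (K:=R_AbsRing) (V:=R_NormedModule)). auto_derive. auto. Qed.

Lemma g_ex n b a c : ex_RInt (g n b) a c.
Proof. apply (ex_RInt_continuous (V:=R_CompleteNormedModule)); intros; apply g_cont. Qed.

Lemma T_pos n b : 0 < T n b.
Proof.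
  unfold T. apply RInt_gt_0.
  - pose proof PI_RGT_0; lra.
  - intros x Hx. unfold g. apply Rmult_lt_0_compat.
    + apply pow_lt. apply cos_gt_0; lra.
    + apply exp_pos.
  - intros; apply g_cont.
Qed.

Lemma T_is n b : is_RInt (g n b) (-(PI/2)) (PI/2) (T n b).
Proof. apply (RInt_correct (V:=R_CompleteNormedModule)), g_ex. Qed.

Lemma my_cos_pi2 : cos (PI/2) = 0. Proof. apply cos_PI2. Qed.
Lemma my_cos_mpi2 : cos (-(PI/2)) = 0. Proof. rewrite cos_neg; apply cos_PI2. Qed.

Lemma T_rec n b :
  b^2 * T (n+4) b + INR (n+2) * INR (n+3) * T (n+2) b
  - INR (n+3) * INR (n+1) * T n b = 0.
Proof.
  set (Psi := fun t => (b * cos t ^ (n+3) + INR (n+3) * sin t * cos t ^ (n+1)) * exp (b * sin t)).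
  set (F := fun t => b^2 * g (n+4) b t + INR (n+2) * INR (n+3) * g (n+2) b t
                     - INR (n+3) * INR (n+1) * g n b t).
  assert (H1 : is_RInt F (-(PI/2)) (PI/2) (minus (Psi (PI/2)) (Psi (-(PI/2))))).
  { apply (is_RInt_derive (V:=R_CompleteNormedModule)).
    - intros t _. unfold Psi, F, g. auto_derive; auto.
      rewrite !pow_add.
      replace (Nat.pred (n+3)) with (n+2)%nat by lia.
      replace (Nat.pred (n+1)) with n by lia.
      rewrite !pow_add.
      assert (E : sin t ^ 2 + cos t ^ 2 = 1) by (rewrite <- (sin2_cos2 t); unfold Rsqr; ring).
      rewrite !plus_INR. simpl INR.
      set (c := cos t) in *. set (s := sin t) in *. set (e := exp (b*s)) in *.
      set (cn := c ^ n) in *. set (N := INR n) in *.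
      assert (K : e * (- (N+3) * (N+1) * cn) * (s^2 + c^2 - 1) = 0) by (rewrite E; ring).
      simpl. nra.
    - intros; unfold F. apply (ex_derive_continuous (K:=R_AbsRing) (V:=R_NormedModule)). unfold g. auto_derive. auto. }
  assert (H2 : is_RInt F (-(PI/2)) (PI/2)
     (b^2 * T (n+4) b + INR (n+2) * INR (n+3) * T (n+2) b - INR (n+3) * INR (n+1) * T n b)).
  { unfold F.
    apply (is_RInt_minus (fun t => b^2 * g (n+4) b t + INR (n+2) * INR (n+3) * g (n+2) b t)
            (fun t => INR (n+3) * INR (n+1) * g n b t)).
    apply (is_RInt_plus (fun t => b^2 * g (n+4) b t) (fun t => INR (n+2) * INR (n+3) * g (n+2) b t)).
    all: apply (is_RInt_scal (V:=R_NormedModule)); apply T_is. }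
  rewrite <- (is_RInt_unique _ _ _ _ H2), (is_RInt_unique _ _ _ _ H1).
  unfold Psi. rewrite my_cos_pi2, my_cos_mpi2. rewrite !pow_add. simpl.
  unfold minus, plus, opp; simpl. ring.
Qed.


Lemma T_ibp n b :
  RInt (fun t => cos t ^ n * sin t * exp (b * sin t)) (-(PI/2)) (PI/2)
  = b * T (n+2) b / INR (n+1).
Proof.
  set (Psi := fun t => cos t ^ (n+1) * exp (b * sin t)).
  set (F := fun t => b * g (n+2) b t - INR (n+1) * (cos t ^ n * sin t * exp (b * sin t))).
  assert (Hc : forall t, continuous (fun t => cos t ^ n * sin t * exp (b * sin t)) t).
  { intros; apply (ex_derive_continuous (K:=R_AbsRing) (V:=R_NormedModule)). auto_derive; auto. }
  assert (Hex : ex_RInt (fun t => cos t ^ n * sin t * exp (b * sin t)) (-(PI/2)) (PI/2)).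
  { apply (ex_RInt_continuous (V:=R_CompleteNormedModule)); intros; apply Hc. }
  assert (H1 : is_RInt F (-(PI/2)) (PI/2) (minus (Psi (PI/2)) (Psi (-(PI/2))))).
  { apply (is_RInt_derive (V:=R_CompleteNormedModule)).
    - intros t _. unfold Psi, F, g. auto_derive; auto.
      replace (Nat.pred (n+1)) with n by lia.
      rewrite !pow_add, !plus_INR. simpl. ring.
    - intros; unfold F. apply (ex_derive_continuous (K:=R_AbsRing) (V:=R_NormedModule)).
      unfold g. auto_derive. auto. }
  assert (H2 : is_RInt F (-(PI/2)) (PI/2)
     (b * T (n+2) b - INR (n+1) * RInt (fun t => cos t ^ n * sin t * exp (b * sin t)) (-(PI/2)) (PI/2))).
  { unfold F.
    apply (is_RInt_minus (V:=R_NormedModule) (fun t => b * g (n+2) b t)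
            (fun t => INR (n+1) * (cos t ^ n * sin t * exp (b * sin t)))).
    - apply (is_RInt_scal (V:=R_NormedModule)); apply T_is.
    - apply (is_RInt_scal (V:=R_NormedModule)).
      apply (RInt_correct (V:=R_CompleteNormedModule)), Hex. }
  pose proof (is_RInt_unique _ _ _ _ H1) as E1.
  rewrite (is_RInt_unique _ _ _ _ H2) in E1.
  unfold Psi in E1. cbv beta in E1. rewrite my_cos_pi2, my_cos_mpi2 in E1. rewrite (pow_i (n+1)) in E1 by lia. 
  rewrite !Rmult_0_l in E1.
  unfold minus, plus, opp in E1. cbn -[PI RInt T INR] in E1.
  assert (0 < INR (n+1)) by (apply lt_0_INR; lia).
  set (X := RInt _ _ _) in *.
  enough (H3 : (X:R) = b * T (n+2) b / INR (n+1)) by exact H3.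
  apply (Rmult_eq_reg_l (INR (n+1))); [|lra].
  field_simplify; [|lra]. lra.
Qed.

Lemma T_deriv n b : is_derive (T n) b (b * T (n+2) b / INR (n+1)).
Proof.
  rewrite <- T_ibp.
  assert (HD : forall u v, Derive (fun z => g n z v) u = cos v ^ n * sin v * exp (u * sin v)).
  { intros. apply is_derive_unique. unfold g. auto_derive; auto. ring. }
  assert (H : is_derive (fun x => RInt (fun t => g n x t) (-(PI/2)) (PI/2)) b
             (RInt (fun t => Derive (fun u => g n u t) b) (-(PI/2)) (PI/2))).
  { apply (is_derive_RInt_param (fun u t => g n u t)).
  - apply filter_forall. intros; unfold g; auto_derive; auto.
  - intros t _. apply (continuity_2d_pt_ext (fun u v => cos v ^ n * sin v * exp (u * sin v))).
    { intros; symmetry; apply HD. }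
    assert (Hp : forall f x, ex_derive f x -> continuity_pt f x).
    { intros f x Hf. apply continuity_pt_filterlim.
      apply (ex_derive_continuous (K:=R_AbsRing) (V:=R_NormedModule)); auto. }
    apply continuity_2d_pt_mult.
    + apply continuity_2d_pt_mult.
      * apply (continuity_1d_2d_pt_comp (fun x => cos x ^ n) (fun u v => v)).
        apply Hp; auto_derive; auto. apply continuity_2d_pt_id2.
      * apply (continuity_1d_2d_pt_comp sin (fun u v => v)).
        apply Hp; auto_derive; auto. apply continuity_2d_pt_id2.
    + apply (continuity_1d_2d_pt_comp exp (fun u v => u * sin v)).
      apply Hp; auto_derive; auto.
      apply continuity_2d_pt_mult. apply continuity_2d_pt_id1.
      apply (continuity_1d_2d_pt_comp sin (fun u v => v)).
      apply Hp; auto_derive; auto. apply continuity_2d_pt_id2.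
  - apply filter_forall. intros; apply g_ex. }
  rewrite (RInt_ext _ (fun t => cos t ^ n * sin t * exp (b * sin t))) in H.
  2: { intros; apply HD. }
  exact H.
Qed.


Lemma cmp (h : R -> R) : h 0 = 0 -> (forall x, continuity_pt h x) ->
  (forall x, 0 < x -> h x < 0 -> exists l, is_derive h x l /\ 0 < l) ->
  forall b, 0 <= b -> 0 <= h b.
Proof.
  intros H0 Hc Hd b1 Hb1.
  destruct (Rle_or_lt 0 (h b1)) as [|Hneg]; [auto|exfalso].
  assert (Hb1' : 0 < b1).
  { destruct Hb1 as [|E]; auto. subst. lra. }
  destruct (continuity_ab_min h 0 b1) as [m [Hm Hmr]]; [lra| intros; apply Hc|].
  assert (hm : h m < 0) by (pose proof (Hm b1 ltac:(lra)); lra).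
  assert (m0 : 0 < m).
  { destruct Hmr as [[|E] _]; auto. subst. lra. }
  destruct (Hd m m0 hm) as [l [Hl lpos]].
  apply is_derive_Reals in Hl.
  destruct (Hl l lpos) as [del Hdel].
  set (e0 := Rmin (del/2) (m/2)).
  assert (e0pos : 0 < e0).
  { unfold e0. apply Rmin_pos; pose proof (cond_pos del); lra. }
  assert (e0le : e0 <= del/2) by apply Rmin_l.
  assert (e0le2 : e0 <= m/2) by apply Rmin_r.
  pose proof (cond_pos del).
  specialize (Hdel (- e0) ltac:(lra)).
  assert (Habs : Rabs (- e0) < del) by (rewrite Rabs_Ropp, Rabs_pos_eq; lra).
  specialize (Hdel Habs).
  pose proof (Hm (m + - e0) ltac:(lra)) as Hmin.
  apply Rabs_def2 in Hdel. destruct Hdel as [_ Hlow].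
  assert (Hq : 0 < (h (m + - e0) - h m) / - e0) by lra.
  assert (h (m + - e0) - h m < 0).
  { unfold Rdiv in Hq. rewrite <- Ropp_inv_permute in Hq by lra.
    assert (0 < / e0) by (apply Rinv_0_lt_compat; lra).
    nra. }
  lra.
Qed.

Lemma alg (N b A B C sg : R) : 0 <= N -> 0 < b -> 0 < A -> 0 < B -> 1/2 <= sg ->
  sg^2 = /4 + b^2/((N+2)*(N+4)) ->
  b^2 * C = -((N+2)*(N+3)) * B + (N+3)*(N+1)*A ->
  A/B < (N+2)/(N+1) * (/2 + sg) ->
  0 < (b * B / (N+1) * B - A * (b * C / (N+3))) / B^2 - (N+2)/(N+1) * (b/((N+2)*(N+4)*sg)).
Proof.
  intros HN Hb HA HB Hs Hs2 Hrec Hq.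
  set (q := A/B) in *. set (Q := (N+2)/(N+1) * (/2 + sg)) in *.
  assert (Aq : A = q * B) by (unfold q; field; lra).
  assert (HC : C = (N+3) * ((N+1)*A - (N+2)*B) / b^2).
  { apply (Rmult_eq_reg_l (b^2)); [|nra]. rewrite Hrec. field. lra. }
  assert (qpos : 0 < q) by (unfold q; apply Rdiv_lt_0_compat; lra).
  assert (E1 : (b * B / (N+1) * B - A * (b * C / (N+3))) / B^2
              = (b^2/(N+1) - q * ((N+1)*q - (N+2))) / b).
  { rewrite HC, Aq. field. repeat split; lra. }
  assert (E2 : (N+2)/(N+1) * (b/((N+2)*(N+4)*sg)) = b^2/((N+1)*(N+4)*sg) / b).
  { field. repeat split; lra. }
  rewrite E1, E2.
  replace ((b^2/(N+1) - q * ((N+1)*q - (N+2))) / b - b^2/((N+1)*(N+4)*sg) / b)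
    with ((b^2/(N+1) - q * ((N+1)*q - (N+2)) - b^2/((N+1)*(N+4)*sg)) / b) by (field; repeat split; lra).
  apply Rdiv_lt_0_compat; [|lra].
  assert (HQ1 : (N+2)/(N+1) <= Q).
  { unfold Q. assert (0 < (N+2)/(N+1)) by (apply Rdiv_lt_0_compat; lra). nra. }
  assert (GQ : b^2/(N+1) - (N+1)*Q^2 + (N+2)*Q = 2*b^2/((N+1)*(N+4))).
  { assert (Z : b^2/(N+1) - (N+1)*Q^2 + (N+2)*Q - 2*b^2/((N+1)*(N+4))
       = -(N+1)*((N+2)/(N+1))^2 * (sg^2 - (/4 + b^2/((N+2)*(N+4))))).
    { unfold Q. field. lra. }
    rewrite Hs2 in Z. lra. }
  assert (Gq : b^2/(N+1) - q*((N+1)*q - (N+2)) - (b^2/(N+1) - (N+1)*Q^2 + (N+2)*Q)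
               = (Q - q) * ((N+1)*(q+Q) - (N+2))) by ring.
  assert (P1 : 0 < (Q - q) * ((N+1)*(q+Q) - (N+2))).
  { apply Rmult_lt_0_compat; [lra|].
    assert ((N+1) * ((N+2)/(N+1)) = N+2) by (field; lra). nra. }
  assert (P2 : b^2/((N+1)*(N+4)*sg) <= 2*b^2/((N+1)*(N+4))).
  { assert (0 < b^2/((N+1)*(N+4))) by (apply Rdiv_lt_0_compat; nra).
    replace (b^2/((N+1)*(N+4)*sg)) with (b^2/((N+1)*(N+4)) * /sg) by (field; repeat split; lra).
    replace (2*b^2/((N+1)*(N+4))) with (b^2/((N+1)*(N+4)) * 2) by (field; lra).
    apply Rmult_le_compat_l; [lra|].
    replace 2 with (/ (1/2)) by field. apply Rinv_le_contravar; lra. }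
  lra.
Qed.

Lemma INR_p n k : INR (n + k) = INR n + INR k. Proof. apply plus_INR. Qed.
Lemma I1 : INR 1 = 1. Proof. reflexivity. Qed.
Lemma I2 : INR 2 = 2. Proof. simpl; ring. Qed.
Lemma I3 : INR 3 = 3. Proof. simpl; ring. Qed.
Lemma I4 : INR 4 = 4. Proof. simpl; ring. Qed.

Lemma T_rec' n b :
  b^2 * T (n+4) b = -((INR n+2)*(INR n+3)) * T (n+2) b + (INR n+3)*(INR n+1) * T n b.
Proof. pose proof (T_rec n b) as H. rewrite !INR_p, I1, I2, I3 in H. lra. Qed.

Lemma T_ratio0 n : T n 0 / T (n+2) 0 = (INR n + 2)/(INR n + 1).
Proof.
  pose proof (T_rec' n 0) as H. pose proof (T_pos n 0). pose proof (T_pos (n+2) 0).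
  pose proof (pos_INR n).
  apply (Rmult_eq_reg_r (T (n+2) 0 * (INR n + 1))); [|apply Rmult_integral_contrapositive; split; lra].
  field_simplify; [|lra|lra]. nra.
Qed.

Definition sfun (N b : R) := /2 + sqrt (/4 + b^2/((N+2)*(N+4))).

Lemma main_ineq n b : 0 <= b ->
  T n b / T (n+2) b >= (INR n + 2)/(INR n + 1) * sfun (INR n) b.
Proof.
  intros hb. set (N := INR n). assert (HN : 0 <= N) by apply pos_INR.
  set (h := fun x => T n x / T (n+2) x - (N + 2)/(N + 1) * sfun N x).
  assert (Sp : forall x, 0 < /4 + x^2/((N+2)*(N+4))).
  { intros. assert (0 <= x^2/((N+2)*(N+4))) by (apply Rdiv_le_0_compat; nra). lra. }
  assert (Hd : forall x, is_derive h x
     ((x * T (n+2) x / (N+1) * T (n+2) x - T n x * (x * T (n+4) x / (N+3))) / (T (n+2) x)^2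
      - (N+2)/(N+1) * (x/((N+2)*(N+4)*sqrt (/4 + x^2/((N+2)*(N+4))))))).
  { intros x. unfold h.
    apply (is_derive_minus (V:=R_NormedModule)).
    - pose proof (T_deriv n x) as D1. pose proof (T_deriv (n+2) x) as D2.
      replace (n+2+2)%nat with (n+4)%nat in D2 by lia.
      replace (INR (n+2+1)) with (N+3) in D2 by (unfold N; rewrite !INR_p, I1, I2; ring).
      replace (INR (n+1)) with (N+1) in D1 by (unfold N; rewrite !INR_p, I1; ring).
      apply (is_derive_div _ _ _ _ _ D1 D2). pose proof (T_pos (n+2) x); lra.
    - unfold sfun. auto_derive.
      + pose proof (Sp x); lra.
      + pose proof (Sp x). pose proof (sqrt_lt_R0 _ (Sp x)). match goal with |- ?a = ?c => change (@eq R a c) end. change (x*(x*1)) with (x^2). set (S := sqrt _) in *. field. repeat split; lra. }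
  assert (H0 : h 0 = 0).
  { unfold h, sfun. rewrite T_ratio0. fold N.
    replace (/4 + 0^2/((N+2)*(N+4))) with ((/2)^2) by (field; lra).
    rewrite sqrt_pow2 by lra. field. lra. }
  assert (Hc : forall x, continuity_pt h x).
  { intros x. apply continuity_pt_filterlim.
    apply (ex_derive_continuous (K:=R_AbsRing) (V:=R_NormedModule)).
    eexists; apply Hd. }
  pose proof (cmp h H0 Hc) as K.
  assert (Hpos : forall x, 0 < x -> h x < 0 -> exists l, is_derive h x l /\ 0 < l).
  { intros x Hx Hhx. eexists; split; [apply Hd|].
    apply alg with (A := T n x) (B := T (n+2) x) (C := T (n+4) x); auto.
    - apply T_pos.
    - apply T_pos.
    - pose proof (sqrt_pow2 (/2) ltac:(lra)).
      assert (/4 <= /4 + x^2/((N+2)*(N+4))) by (pose proof (Sp x); assert (0 <= x^2/((N+2)*(N+4))) by (apply Rdiv_le_0_compat; nra); lra).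
      replace (1/2) with (sqrt ((/2)^2)) by (rewrite sqrt_pow2; lra).
      apply sqrt_le_1_alt. lra.
    - rewrite <- Rsqr_pow2, Rsqr_sqrt; [ring|]. pose proof (Sp x); lra.
    - apply T_rec'.
    - unfold h in Hhx. unfold sfun in Hhx. lra. }
  specialize (K Hpos b hb). unfold h in K. lra.
Qed.


Definition G p b t := RInt (g p b) 0 t.

Lemma G_deriv p b t : is_derive (G p b) t (g p b t).
Proof.
  apply (is_derive_RInt (V:=R_CompleteNormedModule) (g p b) (G p b) 0 t).
  - apply filter_forall. intros; apply (RInt_correct (V:=R_CompleteNormedModule)), g_ex.
  - apply g_cont.
Qed.

Lemma G_diff p b u v : G p b u - G p b v = RInt (g p b) v u.
Proof.
  unfold G. rewrite <- (RInt_Chasles (V:=R_CompleteNormedModule) (g p b) 0 v u) by apply g_ex.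
  unfold plus; simpl. ring.
Qed.

Lemma g_bound p b t : Rabs (g p b t) <= exp (Rabs b).
Proof.
  unfold g. rewrite Rabs_mult, <- RPow_abs.
  rewrite (Rabs_pos_eq (exp _)) by (left; apply exp_pos).
  assert (Hc : Rabs (cos t) ^ p <= 1).
  { rewrite <- (pow1 p). apply pow_incr. split; [apply Rabs_pos|].
    apply Rabs_le. apply COS_bound. }
  assert (He : exp (b * sin t) <= exp (Rabs b)).
  { destruct (Req_dec (b * sin t) (Rabs b)) as [E|E]; [rewrite E; lra|left].
    apply exp_increasing.
    assert (Rabs (b * sin t) <= Rabs b).
    { rewrite Rabs_mult. assert (Rabs (sin t) <= 1) by (apply Rabs_le; apply SIN_bound).
      pose proof (Rabs_pos b). nra. }
    pose proof (Rle_abs (b * sin t)). lra. }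
  pose proof (exp_pos (b * sin t)). pose proof (pow_le (Rabs (cos t)) p (Rabs_pos _)). nra.
Qed.

Lemma G_lip p b u v : Rabs (G p b u - G p b v) <= exp (Rabs b) * Rabs (u - v).
Proof.
  rewrite G_diff.
  destruct (Rle_or_lt v u) as [Hvu|Hvu].
  - pose proof (abs_RInt_le_const (g p b) v u (exp (Rabs b)) Hvu (g_ex _ _ _ _)
      (fun t _ => g_bound p b t)).
    rewrite (Rabs_pos_eq (u - v)) by lra. lra.
  - rewrite <- (opp_RInt_swap (V:=R_CompleteNormedModule)) by apply g_ex.
    pose proof (abs_RInt_le_const (g p b) u v (exp (Rabs b)) (Rlt_le _ _ Hvu) (g_ex _ _ _ _)
      (fun t _ => g_bound p b t)).
    unfold opp; simpl. rewrite Rabs_Ropp.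
    rewrite (Rabs_minus_sym u v), (Rabs_pos_eq (v - u)) by lra. lra.
Qed.

Lemma asin_near1 e : 0 < e < 1 -> 0 <= PI/2 - asin (1-e) /\ (PI/2 - asin (1-e))^2 <= 4*e.
Proof.
  intros He.
  set (y := asin (1-e)).
  assert (Sy : sin y = 1 - e) by (apply sin_asin; lra).
  pose proof (asin_bound (1-e)) as By. fold y in By.
  assert (y0 : 0 <= y).
  { destruct (Rle_or_lt 0 y) as [|Hy]; auto.
    pose proof PI_RGT_0.
    assert (sin y < 0) by (apply sin_lt_0_var; lra). lra. }
  set (z := PI/2 - y).
  assert (Cz : cos z = 1 - e) by (unfold z; rewrite cos_shift; auto).
  destruct (cos_bound z 0) as [_ Hup]; [unfold z; lra| unfold z; lra|].
  unfold cos_approx, cos_term in Hup. simpl in Hup.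
  pose proof PI_4.
  assert (z0 : 0 <= z) by (unfold z; lra).
  assert (z2 : z <= 2) by (unfold z; lra).
  split; [lra|].
  rewrite Cz in Hup. assert (H4 : 1 - e <= 1 - z^2/2 + z^4/24) by (eapply Rle_trans; [exact Hup| right; field]). assert (z*z <= 4) by nra. assert (z^4 <= 4 * z^2) by (replace (z^4) with ((z*z)*(z*z)) by ring; nra). nra.
Qed.

Lemma Rpower_half p y : 0 < y ->
  Rpower y (IZR (Z.of_nat p - 1) / 2) = sqrt y ^ p * / sqrt y.
Proof.
  intros Hy.
  rewrite minus_IZR, <- INR_IZR_INZ.
  pose proof (sqrt_lt_R0 _ Hy) as Hs.
  rewrite <- (Rpower_pow p (sqrt y)) by auto.
  rewrite <- (Rpower_sqrt y) by auto.
  rewrite Rpower_mult.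
  assert (E : Rpower y ((INR p - 1)/2) * Rpower y (/2) = Rpower y (/2 * INR p)).
  { rewrite <- Rpower_plus. f_equal. field. }
  rewrite <- E. rewrite Rpower_sqrt by auto. field. lra.
Qed.

Lemma Jint_eq p b x : -1 < x < 1 ->
  J_integrand (Z.of_nat p - 1) b x = g p b (asin x) * / sqrt (1 - x^2).
Proof.
  intros Hx. unfold J_integrand, g.
  rewrite cos_asin, sin_asin by lra.
  replace (x²) with (x^2) by (unfold Rsqr; ring).
  rewrite Rpower_half by nra. ring.
Qed.

Lemma H_deriv p b x : -1 < x < 1 ->
  is_derive (fun x => G p b (asin x)) x (J_integrand (Z.of_nat p - 1) b x).
Proof.
  intros Hx.
  assert (Da : is_derive asin x (1 / sqrt (1 - x²))).
  { apply is_derive_Reals. apply (derive_pt_eq_1 _ _ _ (derivable_pt_asin x Hx)).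
    apply derive_pt_asin. }
  pose proof (is_derive_comp (G p b) asin x _ _ (G_deriv p b (asin x)) Da) as HH.
  rewrite Jint_eq by auto.
  replace (g p b (asin x) * / sqrt (1 - x ^ 2)) with (scal (1 / sqrt (1 - x²)) (g p b (asin x))).
  exact HH.
  unfold scal; simpl; unfold mult; simpl. replace (x²) with (x^2) by (unfold Rsqr; ring). match goal with |- ?a = ?c => change (@eq R a c) end. set (S := sqrt _). field.
  assert (0 < 1 - x^2) by nra. pose proof (sqrt_lt_R0 _ H). unfold S; lra.
Qed.

Lemma Jint_cont p b x : -1 < x < 1 -> continuous (J_integrand (Z.of_nat p - 1) b) x.
Proof.
  intros Hx. apply (ex_derive_continuous (K:=R_AbsRing) (V:=R_NormedModule)).
  unfold J_integrand, Rpower. auto_derive. nra.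
Qed.

Lemma T_as_G p b : T p b = G p b (PI/2) - G p b (-(PI/2)).
Proof. rewrite G_diff. reflexivity. Qed.

Lemma improper_T p b : improper_int_m1_1 (J_integrand (Z.of_nat p - 1) b) (T p b).
Proof.
  exists (fun e => G p b (asin (1-e)) - G p b (asin (-1+e))).
  split.
  - intros e He.
    assert (Hi : is_RInt (J_integrand (Z.of_nat p - 1) b) (-1+e) (1-e)
                   (minus (G p b (asin (1-e))) (G p b (asin (-1+e))))).
    { apply (is_RInt_derive (V:=R_CompleteNormedModule) (fun x => G p b (asin x))).
      - intros x Hx. apply H_deriv.
        revert Hx; unfold Rmin, Rmax; destruct Rle_dec; lra.
      - intros x Hx. apply Jint_cont.
        revert Hx; unfold Rmin, Rmax; destruct Rle_dec; lra. }
    exists (ex_RInt_Reals_0 _ _ _ (ex_intro _ _ Hi)).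
    rewrite <- RInt_Reals. rewrite (is_RInt_unique _ _ _ _ Hi).
    unfold minus, plus, opp; simpl. ring.
  - unfold limit1_in, limit_in. simpl. unfold R_dist. intros eps Heps.
    set (M := exp (Rabs b)).
    assert (Mpos : 0 < M) by apply exp_pos.
    exists (Rmin 1 (eps^2/(16*M^2+1))).
    split.
    { apply Rmin_pos; [lra|]. apply Rdiv_lt_0_compat; nra. }
    intros e [He Hd].
    assert (Hd2 : e < eps^2/(16*M^2+1)).
    { rewrite Rminus_0_r, Rabs_pos_eq in Hd by lra.
      pose proof (Rmin_r 1 (eps^2/(16*M^2+1))). lra. }
    destruct (asin_near1 e He) as [z0 z2].
    set (z := PI/2 - asin (1-e)) in *.
    replace (-1 + e) with (-(1-e)) by ring. rewrite asin_opp.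
    rewrite T_as_G.
    pose proof (G_lip p b (asin (1-e)) (PI/2)) as L1.
    pose proof (G_lip p b (- asin (1-e)) (-(PI/2))) as L2.
    fold M in L1, L2.
    replace (asin (1-e) - PI/2) with (- z) in L1 by (unfold z; ring).
    replace (- asin (1-e) - - (PI/2)) with z in L2 by (unfold z; ring).
    rewrite Rabs_Ropp, (Rabs_pos_eq z) in L1 by lra.
    rewrite (Rabs_pos_eq z) in L2 by lra.
    assert (Hz : 2 * M * z < eps).
    { assert (16 * M^2 * e < eps^2).
      { apply (Rmult_lt_compat_r (16*M^2+1)) in Hd2; [|nra].
        unfold Rdiv in Hd2. rewrite Rmult_assoc, Rinv_l in Hd2 by nra. nra. }
      assert ((2*M*z)^2 < eps^2) by nra.
      nra. }
    eapply Rle_lt_trans; [|exact Hz].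
    replace (G p b (asin (1 - e)) - G p b (- asin (1 - e)) - (G p b (PI / 2) - G p b (- (PI / 2))))
      with ((G p b (asin (1 - e)) - G p b (PI/2)) - (G p b (- asin (1 - e)) - G p b (- (PI / 2)))) by ring.
    eapply Rle_trans; [apply Rabs_triang|]. rewrite Rabs_Ropp. lra.
Qed.

Lemma J_eq p b : J (Z.of_nat p - 1) b = T p b.
Proof.
  set (k := (Z.of_nat p - 1)%Z).
  pose proof (epsilon_spec (inhabits 0) (fun L => improper_int_m1_1 (J_integrand k b) L)
                (ex_intro _ _ (improper_T p b))) as HJ.
  change (epsilon (inhabits 0) (fun L => improper_int_m1_1 (J_integrand k b) L)) with (J k b) in HJ.
  destruct HJ as [F1 [HF1 L1]].
  destruct (improper_T p b) as [F2 [HF2 L2]].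
  assert (Eq : forall e, 0 < e < 1 -> F1 e = F2 e).
  { intros e He. destruct (HF1 e He) as [pr1 E1]. destruct (HF2 e He) as [pr2 E2].
    rewrite <- E1, <- E2. apply RiemannInt_P5. }
  assert (L1' : limit1_in F2 (fun e => 0 < e < 1) (J k b) 0).
  { intros eps Heps. destruct (L1 eps Heps) as [a [Ha Hx]]. exists a. split; auto.
    intros x [Dx Dd]. rewrite <- Eq by auto. apply Hx; auto. }
  apply (single_limit F2 (fun e => 0 < e < 1) _ _ 0); auto.
  intros alp Halp. exists (Rmin (alp/2) (1/2)). split.
  - split; [apply Rmin_pos; lra|]. pose proof (Rmin_r (alp/2) (1/2)); lra.
  - simpl. unfold R_dist. rewrite Rminus_0_r. 
    assert (0 < Rmin (alp/2) (1/2)) by (apply Rmin_pos; lra).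
    rewrite Rabs_pos_eq by lra. pose proof (Rmin_l (alp/2) (1/2)); lra.
Qed.


Lemma fin_d (N b A B C s : R) : 0 <= N -> 0 < b -> 0 < A -> 0 < B -> 0 < C -> 1 <= s ->
  s^2 - s = b^2/((N+2)*(N+4)) ->
  b^2 * C = -((N+2)*(N+3)) * B + (N+3)*(N+1)*A ->
  A/B >= (N+2)/(N+1) * s ->
  C * A >= B^2 * ((N+2)*(N+3)/((N+1)*(N+4))).
Proof.
  intros HN Hb HA HB HC Hs Hs2 Hrec Hq.
  set (q := A/B) in *. set (Q := (N+2)/(N+1) * s) in *.
  assert (Aq : A = q * B) by (unfold q; field; lra).
  assert (HC' : C = (N+3) * ((N+1)*A - (N+2)*B) / b^2).
  { apply (Rmult_eq_reg_l (b^2)); [|nra]. rewrite Hrec. field. lra. }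
  assert (HQ1 : (N+2)/(N+1) <= Q).
  { unfold Q. assert (0 < (N+2)/(N+1)) by (apply Rdiv_lt_0_compat; lra). nra. }
  assert (GQ : (N+1)*Q^2 - (N+2)*Q = (N+2)*b^2/((N+1)*(N+4))).
  { assert (Z : (N+1)*Q^2 - (N+2)*Q - (N+2)*b^2/((N+1)*(N+4))
        = (N+2)^2/(N+1) * (s^2 - s - b^2/((N+2)*(N+4)))).
    { unfold Q. field. lra. }
    rewrite Hs2 in Z. lra. }
  assert (Mono : (N+1)*q^2 - (N+2)*q >= (N+1)*Q^2 - (N+2)*Q).
  { assert (E : (N+1)*q^2 - (N+2)*q - ((N+1)*Q^2 - (N+2)*Q) = (q - Q)*((N+1)*(q+Q) - (N+2))) by ring.
    assert (0 <= (q - Q)*((N+1)*(q+Q) - (N+2))).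
    { apply Rmult_le_pos; [lra|].
      assert ((N+1) * ((N+2)/(N+1)) = N+2) by (field; lra). nra. }
    lra. }
  assert (Key : C * A - B^2 * ((N+2)*(N+3)/((N+1)*(N+4)))
      = B^2 / b^2 * ((N+3) * ((N+1)*q^2 - (N+2)*q) - (N+3)*((N+2)*b^2/((N+1)*(N+4))))).
  { rewrite HC', Aq. field. repeat split; lra. }
  assert (0 <= B^2/b^2) by (apply Rdiv_le_0_compat; nra).
  assert (0 <= (N+3) * ((N+1)*q^2 - (N+2)*q) - (N+3)*((N+2)*b^2/((N+1)*(N+4)))).
  { rewrite <- GQ. nra. }
  assert (0 <= C * A - B^2 * ((N+2)*(N+3)/((N+1)*(N+4)))) by (rewrite Key; nra).
  lra.
Qed.

Lemma fin_c (N b A B C s : R) : 0 <= N -> 0 < b -> 0 < A -> 0 < B -> 0 < C -> 1 <= s ->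
  s^2 - s = b^2/((N+2)*(N+4)) ->
  b^2 * C = -((N+2)*(N+3)) * B + (N+3)*(N+1)*A ->
  C * A >= B^2 * ((N+2)*(N+3)/((N+1)*(N+4))) ->
  B/C <= (N+4)/(N+3) * s.
Proof.
  intros HN Hb HA HB HC Hs Hs2 Hrec Hd.
  set (u := B/C * ((N+3)/(N+4))).
  assert (upos : 0 < u) by (unfold u; apply Rmult_lt_0_compat; apply Rdiv_lt_0_compat; lra).
  assert (Bu : B = u * C * ((N+4)/(N+3))) by (unfold u; field; lra).
  assert (Hu : u^2 - u <= b^2/((N+2)*(N+4))).
  { rewrite Bu in Hd, Hrec.
    assert (E1 : b^2 = ((N+3)*(N+1)*A - (N+2)*(N+4)*u*C)/C).
    { apply (Rmult_eq_reg_r C); [|lra]. rewrite Hrec. field. lra. }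
    assert (E2 : A >= (N+2)*(N+4)/((N+1)*(N+3)) * u^2 * C).
    { assert (C * A >= C * ((N+2)*(N+4)/((N+1)*(N+3)) * u^2 * C)).
      { eapply Rge_trans; [exact Hd|]. right. field. lra. }
      apply Rle_ge. apply (Rmult_le_reg_l C); lra. }
    assert (b^2 >= (N+2)*(N+4)*(u^2 - u)).
    { rewrite E1. apply Rle_ge. apply (Rmult_le_reg_r C); [lra|].
      match goal with |- _ <= ?Y => replace Y with ((N+3)*(N+1)*A - (N+2)*(N+4)*u*C) by (field; lra) end.
      assert ((N+3)*(N+1)*A >= (N+3)*(N+1)*((N+2)*(N+4)/((N+1)*(N+3)) * u^2 * C)).
      { apply Rmult_ge_compat_l; [nra|auto]. }
      assert ((N+3)*(N+1)*((N+2)*(N+4)/((N+1)*(N+3)) * u^2 * C) = (N+2)*(N+4)*u^2*C) by (field; lra).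
      nra. }
    apply (Rmult_le_reg_l ((N+2)*(N+4))); [nra|].
    replace ((N+2)*(N+4)*(b^2/((N+2)*(N+4)))) with (b^2) by (field; lra). lra. }
  assert (u <= s) by nra.
  assert (B/C = u * ((N+4)/(N+3))) by (unfold u; field; lra).
  rewrite H0.
  assert (0 < (N+4)/(N+3)) by (apply Rdiv_lt_0_compat; lra).
  nra.
Qed.

Theorem lemma2 (d : nat) (b : R) (hd : (2 <= d)%nat) (hb : 0 <= b) :
  let Jm3 := J (Z.of_nat d - 3) b in
  let Jm1 := J (Z.of_nat d - 1) b in
  let Jp1 := J (Z.of_nat d + 1) b in
  let D := INR d in
  let s := / 2 + sqrt (/ 4 + b ^ 2 / (D * (D + 2))) in
  (b ^ 2 * Jp1 = - (D * (D + 1)) * Jm1 + (D + 1) * (D - 1) * Jm3)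
  /\ Jm3 / Jm1 >= D / (D - 1) * s
  /\ Jm1 / Jp1 <= (D + 2) / (D + 1) * s
  /\ Jp1 * Jm3 >= Jm1 ^ 2 * (D * (D + 1) / ((D - 1) * (D + 2))).
Proof.
  assert (Hex : exists n, d = (n+2)%nat) by (exists (d-2)%nat; lia). destruct Hex as [n ->].
  intros Jm3 Jm1 Jp1 D s.
  assert (E3 : Jm3 = T n b).
  { unfold Jm3. replace (Z.of_nat (n+2) - 3)%Z with (Z.of_nat n - 1)%Z by lia. apply J_eq. }
  assert (E1 : Jm1 = T (n+2) b) by (unfold Jm1; apply J_eq).
  assert (Ep : Jp1 = T (n+4) b).
  { unfold Jp1. replace (Z.of_nat (n+2) + 1)%Z with (Z.of_nat (n+4) - 1)%Z by lia. apply J_eq. }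
  set (N := INR n).
  assert (HN : 0 <= N) by apply pos_INR.
  assert (ED : D = N + 2) by (unfold D, N; rewrite INR_p, I2; ring).
  assert (Es : s = sfun N b).
  { unfold s, sfun. rewrite ED. replace (N+2+2) with (N+4) by ring. reflexivity. }
  clearbody Jm3 Jm1 Jp1 D s. subst.
  pose proof (T_pos n b) as PA. pose proof (T_pos (n+2) b) as PB. pose proof (T_pos (n+4) b) as PC.
  pose proof (T_rec' n b) as Rec. fold N in Rec.
  pose proof (main_ineq n b hb) as Mi. fold N in Mi.
  set (A := T n b) in *. set (B := T (n+2) b) in *. set (C := T (n+4) b) in *.
  assert (Sp : 0 <= b^2/((N+2)*(N+4))) by (apply Rdiv_le_0_compat; nra).
  set (sg := sqrt (/4 + b^2/((N+2)*(N+4)))).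
  assert (sg2 : sg^2 = /4 + b^2/((N+2)*(N+4))).
  { unfold sg. rewrite <- Rsqr_pow2, Rsqr_sqrt; [ring|lra]. }
  assert (sg1 : 1/2 <= sg).
  { unfold sg. replace (1/2) with (sqrt ((/2)^2)) by (rewrite sqrt_pow2; lra).
    apply sqrt_le_1_alt. lra. }
  assert (Hs1 : 1 <= sfun N b) by (unfold sfun; fold sg; lra).
  assert (Hs2 : (sfun N b)^2 - sfun N b = b^2/((N+2)*(N+4))) by (unfold sfun; fold sg; nra).
  replace (N + 2 - 1) with (N + 1) by ring.
  replace (N + 2 + 1) with (N + 3) by ring.
  replace (N + 2 + 2) with (N + 4) by ring.
  assert (Ha : b ^ 2 * C = - ((N + 2) * (N + 3)) * B + (N + 3) * (N + 1) * A) by lra.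
  destruct (Req_dec b 0) as [b0|bpos].
  - subst b.
    assert (R0 := T_ratio0 n). assert (R2 := T_ratio0 (n+2)).
    replace (n+2+2)%nat with (n+4)%nat in R2 by lia.
    rewrite INR_p, I2 in R2. fold N A B C in R0, R2.
    assert (sf : sfun N 0 = 1).
    { unfold sfun. replace (/4 + 0^2/((N+2)*(N+4))) with ((/2)^2) by (field; lra).
      rewrite sqrt_pow2 by lra. field. }
    rewrite sf.
    assert (HA : A = (N+2)/(N+1) * B).
    { rewrite <- R0. field. lra. }
    assert (HC : C = (N+3)/(N+4) * B).
    { replace ((N+2+2)/(N+2+1)) with ((N+4)/(N+3)) in R2 by (f_equal; ring).
      assert (HB : B = (N+4)/(N+3) * C) by (rewrite <- R2; field; lra).
      rewrite HB. field. lra. }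
    split; [exact Ha|]. split; [|split].
    + rewrite HA. right. field. lra.
    + rewrite HC. right. field. lra.
    + rewrite HA, HC. right. field. lra.
  - assert (bp : 0 < b) by lra.
    assert (Dd := fin_d N b A B C (sfun N b) HN bp PA PB PC Hs1 Hs2 Ha Mi).
    split; [exact Ha|]. split; [exact Mi|]. split.
    + apply (fin_c N b A B C (sfun N b)); auto.
    + replace (C * A) with (C * A) by ring. lra.
Qed.
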